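(* Let $d\ge 2$, let $\pi$ be a permutation of $\{0,1,\dots,d-1\}$ with $\pi(0)=0$, and let $a^{(0)},\dots,a^{(d-1)}$ be positive semidefinite complex $d\times d$ matrices with $\mathrm{Tr}\big(a^{(0)}+\dots+a^{(d-1)}\big)=1$. Let $$\rho_\pi=\sum_{\alpha=0}^{d-1}\sum_{i,j=0}^{d-1} a^{(\alpha)}_{ij}\, e_{ij}\otimes e_{\pi(i)+\alpha,\ \pi(j)+\alpha},$$ which is a state on $\mathbb{C}^d\otimes\mathbb{C}^d$, and define $d\times d$ matrices $\widetilde a^{(\gamma)}$, $\gamma=0,\dots,d-1$, by $\widetilde a^{(\gamma)}_{ij}=a^{(\gamma-\pi(i)-\pi(j))}_{ij}$ (superscript mod $d$). Then $\rho_\pi$ is PPT if and only if $\widetilde a^{(\gamma)}\ge 0$ for every $\gamma=0,\dots,d-1$.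
   Context: $\{e_0,\dots,e_{d-1}\}$ is the computational basis of $\mathbb{C}^d$, $e_{ij}=|e_i\rangle\langle e_j|$, and all indices of basis vectors are taken mod $d$. For an operator $\rho$ on $\mathbb{C}^d\otimes\mathbb{C}^d$, $\rho^\tau=(\mathrm{id}\otimes\tau)\rho$ denotes the partial transposition with respect to the second factor, where $\tau$ is transposition in the computational basis, i.e. $(\mathrm{id}\otimes\tau)(A\otimes B)=A\otimes B^{T}$. A state $\rho$ is called PPT if $\rho^\tau\ge 0$. *)

(* Defs.v *)
From HB Require Import structures.
From mathcomp Require Import all_boot all_order all_algebra all_fingroup.
Set Implicit Arguments. Unset Strict Implicit. Unset Printing Implicit Defensive.
Import Order.TTheory GRing.Theory Num.Theory.
Local Open Scope ring_scope.

(* Decompose an index of C^m (x) C^n (of size m*n) into its pair of indices,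
   inverse to mathcomp's [mxvec_index]. *)
Definition tidx (m n : nat) (p : 'I_(m * n)) : 'I_m * 'I_n :=
  enum_val (cast_ord (esym (mxvec_cast m n)) p).

(* Kronecker product A (x) B, entries indexed by (mxvec_index i k, mxvec_index j l). *)
Definition tensmx (R : pzRingType) (m n p q : nat)
  (A : 'M[R]_(m, n)) (B : 'M[R]_(p, q)) : 'M[R]_(m * p, n * q) :=
  \matrix_(r, c) (A (tidx r).1 (tidx c).1 * B (tidx r).2 (tidx c).2).

(* Partial transposition (id (x) tau) w.r.t. the second factor:
   (id (x) tau)(A (x) B) = A (x) B^T. *)
Definition ptrans (R : pzRingType) (d : nat) (M : 'M[R]_(d * d)) : 'M[R]_(d * d) :=
  \matrix_(r, c) M (mxvec_index (tidx r).1 (tidx c).2)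
                   (mxvec_index (tidx c).1 (tidx r).2).

Definition psd (C : numClosedFieldType) (n : nat) (A : 'M[C]_n) : Prop :=
  forall v : 'cV[C]_n, 0 <= ((map_mx Num.conj v)^T *m A *m v) 0 0.

Definition addI (d : nat) (i : 'I_d) (k : nat) : 'I_d :=
  Ordinal (ltn_pmod (i + k)%N (leq_ltn_trans (leq0n i) (ltn_ord i))).

Definition rho_pi (C : numClosedFieldType) (d : nat) (pi : 'S_d)
  (a : 'I_d -> 'M[C]_d) : 'M[C]_(d * d) :=
  \sum_(alpha < d) \sum_(i < d) \sum_(j < d)
     a alpha i j *: tensmx (delta_mx i j)
                           (delta_mx (addI (pi i) alpha) (addI (pi j) alpha)).

(* tilde a^(gamma)_{ij} = a^(gamma - pi(i) - pi(j) mod d)_{ij} *)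
Definition atilde (C : numClosedFieldType) (d : nat) (pi : 'S_d)
  (a : 'I_d -> 'M[C]_d) (gamma : 'I_d) : 'M[C]_d :=
  \matrix_(i, j) a (addI gamma ((d - pi i) + (d - pi j))%N) i j.

(* Main.v *)
Require Import Defs.
From HB Require Import structures.
From mathcomp Require Import all_boot all_order all_algebra all_fingroup.
Import Order.TTheory GRing.Theory Num.Theory.
Local Open Scope ring_scope.

From Stdlib Require Import Lia.
Set Implicit Arguments. Unset Strict Implicit. Unset Printing Implicit Defensive.
Lemma tidxK m n (i : 'I_m) (j : 'I_n) : tidx (mxvec_index i j) = (i, j).
Proof. by rewrite /tidx /mxvec_index cast_ordK enum_rankK. Qed.

Lemma sum_mxvec (R : nmodType) m n (F : 'I_(m * n) -> R) :
  \sum_r F r = \sum_i \sum_j F (mxvec_index i j).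
Proof.
rewrite pair_bigA /= (reindex (fun p : 'I_m * 'I_n => mxvec_index p.1 p.2)) //=.
case: (@curry_mxvec_bij m n) => g h1 h2; exists g => [[i j] _|k _].
  have H : (uncurry (@mxvec_index m n) (i,j)) \in 'I_(m*n) by []. exact: (h1 _ H).
have H : k \in 'I_(m*n) by []. have := h2 _ H; by case: (g k).
Qed.

Definition qf (C : numClosedFieldType) n (A : 'M[C]_n) (v : 'cV[C]_n) :=
  ((map_mx Num.conj v)^T *m A *m v) 0 0.

Lemma qfE (C : numClosedFieldType) n (A : 'M[C]_n) v :
  qf A v = \sum_i \sum_j (v i 0)^* * A i j * v j 0.
Proof.
rewrite /qf mxE; under eq_bigr do rewrite mxE big_distrl.
rewrite exchange_big; apply eq_bigr => i _; apply eq_bigr => j _.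
by rewrite !mxE.
Qed.

Lemma Mentry (C : numClosedFieldType) d (pi : 'S_d) (a : 'I_d -> 'M[C]_d) i k j l :
  ptrans (rho_pi pi a) (mxvec_index i k) (mxvec_index j l) =
  \sum_(alpha < d) a alpha i j * ((l == addI (pi i) alpha) && (k == addI (pi j) alpha))%:R.
Proof.
rewrite mxE !tidxK /= /rho_pi summxE; apply eq_bigr => alpha _.
rewrite summxE; under eq_bigr do rewrite summxE.
rewrite [LHS](bigD1 i) //= [X in _ + X]big1 => [|i' ni]; last first.
  rewrite big1 // => j' _; rewrite !mxE !tidxK /= eq_sym (negbTE ni) /=.
  by rewrite !mul0r mulr0.
rewrite addr0 [LHS](bigD1 j) //= [X in _ + X]big1 => [|j' nj]; last first.
  by rewrite !mxE !tidxK /= eq_sym (negbTE nj) andbF !mul0r mulr0.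
by rewrite addr0 !mxE !tidxK /= !eqxx /= mul1r.
Qed.

Lemma sum2_delta (R : pzRingType) d (g : 'I_d -> 'I_d -> R) x y :
  \sum_(k < d) \sum_(l < d) g k l * ((l == x) && (k == y))%:R = g y x.
Proof.
rewrite (bigD1 y) //= [X in _ + X]big1 => [|k nk]; last first.
  by rewrite big1 // => l _; rewrite (negbTE nk) andbF mulr0.
rewrite addr0 (bigD1 x) //= [X in _ + X]big1 => [|l nl]; last first.
  by rewrite (negbTE nl) mulr0.
by rewrite !eqxx mulr1 addr0.
Qed.

Lemma addI_val d (x : 'I_d) m : val (addI x m) = ((x + m) %% d)%N.
Proof. by []. Qed.

Lemma fbij d (p q : 'I_d) :
  bijective (fun g : 'I_d => addI g ((d - p) + (d - q))%N).
Proof.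
have dp : (0 < d)%N by apply: leq_ltn_trans (ltn_ord p).
exists (fun al : 'I_d => addI al (p + q)%N) => x; apply: val_inj;
  rewrite !addI_val modnDml.
- have -> : (x + (d - p + (d - q)) + (p + q) = 2 * d + x)%N.
    move: (ltn_ord p) (ltn_ord q) => /ssrnat.leP hp /ssrnat.leP hq.
    rewrite -!plusE -!minusE -!multE; lia.
  by rewrite modnMDl modn_small.
- have -> : (x + (p + q) + (d - p + (d - q)) = 2 * d + x)%N.
    move: (ltn_ord p) (ltn_ord q) => /ssrnat.leP hp /ssrnat.leP hq.
    rewrite -!plusE -!minusE -!multE; lia.
  by rewrite modnMDl modn_small.
Qed.

Lemma addI_sh d (p q g : 'I_d) :
  addI q (addI g ((d - p) + (d - q))%N) = addI g (d - p).
Proof.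
apply: val_inj; rewrite !addI_val modnDmr.
have -> : (q + (g + (d - p + (d - q))) = 1 * d + (g + (d - p)))%N.
  move: (ltn_ord p) (ltn_ord q) => /ssrnat.leP hp /ssrnat.leP hq.
  rewrite -!plusE -!minusE -!multE; lia.
by rewrite modnMDl.
Qed.

Lemma addI_sh' d (p q g : 'I_d) :
  addI p (addI g ((d - p) + (d - q))%N) = addI g (d - q).
Proof. by rewrite addnC addI_sh. Qed.

Lemma key (C : numClosedFieldType) d (pi : 'S_d) (a : 'I_d -> 'M[C]_d) v :
  qf (ptrans (rho_pi pi a)) v =
  \sum_(g < d) qf (atilde pi a g) (\col_i v (mxvec_index i (addI g (d - pi i))) 0).
Proof.
transitivity (\sum_i \sum_j \sum_(al < d) a al i j *
   ((v (mxvec_index i (addI (pi j) al)) 0)^* * v (mxvec_index j (addI (pi i) al)) 0)).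
  rewrite qfE sum_mxvec; apply eq_bigr => i _.
  under eq_bigr => k _ do rewrite sum_mxvec.
  rewrite exchange_big; apply eq_bigr => j _.
  transitivity (\sum_k \sum_l \sum_(al < d)
     ((v (mxvec_index i k) 0)^* * a al i j * v (mxvec_index j l) 0) *
       ((l == addI (pi i) al) && (k == addI (pi j) al))%:R).
    apply eq_bigr => k _; apply eq_bigr => l _.
    rewrite Mentry mulr_sumr mulr_suml; apply eq_bigr => al _.
    by rewrite -!mulrA; congr (_ * (_ * _)); rewrite mulrC.
  rewrite exchange_big; under eq_bigr => k _ do rewrite exchange_big.
  rewrite exchange_big; apply eq_bigr => al _.
  rewrite exchange_big (sum2_delta (fun k l => (v (mxvec_index i k) 0)^* * a al i j * v (mxvec_index j l) 0)).
  by rewrite [_^* * _]mulrC mulrA.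
under [RHS]eq_bigr do rewrite qfE.
rewrite [RHS]exchange_big; under [RHS]eq_bigr do rewrite exchange_big.
apply eq_bigr => i _; apply eq_bigr => j _.
rewrite (reindex _ (onW_bij _ (fbij (pi i) (pi j)))).
apply eq_bigr => g _; rewrite addI_sh addI_sh' !mxE.
by rewrite mulrCA mulrA.
Qed.

Lemma addI_inj d m : injective (fun g : 'I_d => addI g m).
Proof.
move=> x y /(congr1 val) /= /eqP; rewrite eqn_modDr => /eqP.
by rewrite !modn_small // => /val_inj.
Qed.

Lemma qf0 (C : numClosedFieldType) n (A : 'M[C]_n) : qf A 0 = 0.
Proof. by rewrite /qf mulmx0 mxE. Qed.

Theorem theorem3 (C : numClosedFieldType) (d : nat) (hd : (1 < d)%N)
  (pi : 'S_d) (hpi0 : pi (Ordinal (ltnW hd)) = Ordinal (ltnW hd))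
  (a : 'I_d -> 'M[C]_d) (ha : forall alpha, psd (a alpha))
  (htr : \tr (\sum_(alpha < d) a alpha) = 1) :
  psd (ptrans (rho_pi pi a)) <-> (forall gamma : 'I_d, psd (atilde pi a gamma)).
Proof.
split=> [H g0 w | H v]; last first.
  by rewrite -/(qf _ v) key; apply: sumr_ge0 => g _; apply: H.
pose v : 'cV[C]_(d * d) := \col_r (if (tidx r).2 == addI g0 (d - pi (tidx r).1)
                                    then w (tidx r).1 0 else 0).
have := H v; rewrite -/(qf _ v) key (bigD1 g0) //= big1 => [|g ng]; last first.
  have -> : (\col_i v (mxvec_index i (addI g (d - pi i))) 0) = 0.
    apply/colP => i; rewrite !mxE tidxK /=.
    by rewrite (inj_eq (@addI_inj d _)) (negbTE ng).
  exact: qf0.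
have -> : (\col_i v (mxvec_index i (addI g0 (d - pi i))) 0) = w.
  by apply/colP => i; rewrite !mxE tidxK /= eqxx.
by rewrite addr0.
Qed.
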